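(* For every $\lambda\in\Lambda$, $K(Q_\lambda,B)\subset B_0\sqcup B_1$, where $B_0=\{z:|z|<1\}$ and $B_1=\{z:|z-1|<1\}$.
   Context: Let $p$ be a prime, $\mathbb C_p$ with $p$-adic absolute value, $|p|=1/p$. $\Lambda=\{\lambda\in\mathbb C_p:|\lambda-1|<1\}$, $P_\lambda(z)=\frac{\lambda}{p}z^p+\left(1-\frac{\lambda}{p}\right)z^{p+1}$, $\rho=p^{-1/(p-1)}$. Fix $\hat r\in|\mathbb C_p^*|$, $\hat r>1$, $B=\{z:|z|\le\hat r\}$; $\mathcal H(B)$ is the ring of power series $\sum a_iz^i$ convergent on $B$ with norm $\|f\|_B=\sup_i|a_i|\hat r^{\,i}$. Fix $Q\in\mathcal H(B)$ with $\|Q\|_B<\rho$, $Q^*_\lambda=P_\lambda+Q$, and let $h(\lambda)$ be the unique fixed point of $Q^*_\lambda$ in $\{z:|z-1|\le|Q(1)|/p\}$. Define $Q_\lambda(z)=P_\lambda(z+h(\lambda)-1)+Q(z+h(\lambda)-1)+1-h(\lambda)$ for $z\in B$, and $K(Q_\lambda,B)=\{z\in B:Q_\lambda^n(z)\in B\ \forall n\ge0\}$. *)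

(* Defs.v *)
From HB Require Import structures.
From mathcomp Require Import all_boot all_order all_algebra.
From mathcomp Require Import all_classical all_reals all_analysis.
Set Implicit Arguments. Unset Strict Implicit. Unset Printing Implicit Defensive.
Import Order.TTheory GRing.Theory Num.Theory.
Local Open Scope ring_scope.

Section Padic.
Variables (R : realType) (K : fieldType) (abs : K -> R).

Definition abs_cvg (u : nat -> K) (l : K) : Prop :=
  forall eps : R, 0 < eps -> exists N : nat, forall n : nat, (N <= n)%N ->
    abs (u n - l) < eps.

Definition abs_cauchy (u : nat -> K) : Prop :=
  forall eps : R, 0 < eps -> exists N : nat, forall m n : nat,
    (N <= m)%N -> (N <= n)%N -> abs (u m - u n) < eps.

(* abs is a complete non-archimedean absolute value on K with |p| = 1/p.
   Together with K algebraically closed, this is the abstract setting of C_p. *)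
Record padic_abs (p : nat) : Prop := PadicAbs {
  abs_eq0 : forall x, abs x = 0 <-> x = 0;
  abs_ge0 : forall x, 0 <= abs x;
  absM : forall x y, abs (x * y) = abs x * abs y;
  abs_ultra : forall x y, abs (x + y) <= Num.max (abs x) (abs y);
  abs_p : abs p%:R = (p%:R)^-1;
  abs_complete : forall u, abs_cauchy u -> exists l, abs_cvg u l
}.

Definition psum (a : nat -> K) (z : K) (n : nat) : K :=
  \sum_(i < n) a i * z ^+ i.

End Padic.

Definition rho (R : realType) (p : nat) : R :=
  (p%:R : R) `^ (- (1 / (p%:R - 1))).

Definition Plam (K : fieldType) (p : nat) (lam z : K) : K :=
  lam / p%:R * z ^+ p + (1 - lam / p%:R) * z ^+ p.+1.

Definition Qlam (K : fieldType) (p : nat) (Qf : K -> K) (lam h z : K) : K :=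
  Plam p lam (z + h - 1) + Qf (z + h - 1) + 1 - h.

(* Main.v *)
Set Warnings "-all".
Require Import Defs.
From HB Require Import structures.
From mathcomp Require Import all_boot all_order all_algebra.
From mathcomp Require Import all_classical all_reals all_analysis.
From mathcomp Require Import ring lra.
Import Order.TTheory GRing.Theory Num.Theory.
Local Open Scope ring_scope.

Set Implicit Arguments.
Section S.
Variables (R : realType) (K : fieldType) (p : nat) (abs : K -> R).
Hypothesis habs : padic_abs abs p.

Lemma abs1 : abs 1 = 1.
Proof.
have h := absM habs 1 1; rewrite mulr1 in h.
have n0 : abs 1 != 0 by apply/eqP => /(abs_eq0 habs) /eqP; rewrite oner_eq0.
by apply: (mulfI n0); rewrite mulr1 -h.
Qed.

Lemma absN x : abs (- x) = abs x.
Proof.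
have h := absM habs (-1) (-1); rewrite mulrNN mulr1 abs1 in h.
have hn : abs (-1) = 1.
  have g := abs_ge0 habs (-1).
  have : (abs (-1) - 1) * (abs (-1) + 1) = 0 by rewrite mulrDr !mulrBl -h; ring.
  move/eqP; rewrite mulf_eq0 subr_eq0 => /orP[/eqP //|].
  by rewrite addr_eq0 => /eqP e; move: g; rewrite e oppr_ge0 ler10.
by rewrite -mulN1r (absM habs) hn mul1r.
Qed.

Lemma abs_sub x y : abs (x - y) = abs (y - x).
Proof. by rewrite -absN opprB. Qed.

Lemma abs_le x y e : abs x <= e -> abs y <= e -> abs (x + y) <= e.
Proof. move=> hx hy; apply: le_trans (abs_ultra habs x y) _; by rewrite ge_max hx hy. Qed.

Lemma abs_lt x y e : abs x < e -> abs y < e -> abs (x + y) < e.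
Proof. move=> hx hy; apply: le_lt_trans (abs_ultra habs x y) _; by rewrite gt_max hx hy. Qed.

Lemma abs_dom x y : abs y < abs x -> abs (x + y) = abs x.
Proof.
move=> hyx; apply/eqP; rewrite eq_le; apply/andP; split.
  by apply: abs_le => //; exact: ltW.
have := abs_ultra habs (x + y) (- y); rewrite addrK absN.
rewrite le_max => /orP[//|]; by rewrite leNgt hyx.
Qed.

Lemma absX x n : abs (x ^+ n) = abs x ^+ n.
Proof. elim: n => [|n IH]; first by rewrite !expr0 abs1. by rewrite !exprS (absM habs) IH. Qed.

Lemma absV x : abs (x^-1) = (abs x)^-1.
Proof.
have [->|x0] := eqVneq x 0; first by rewrite invr0 (proj2 (abs_eq0 habs 0) erefl) invr0.
have n0 : abs x != 0 by apply/eqP => /(abs_eq0 habs) /eqP; rewrite (negbTE x0).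
apply: (mulfI n0); rewrite -(absM habs) mulfV // abs1 mulfV //.
Qed.


Lemma abs0 : abs 0 = 0.
Proof. exact: (proj2 (abs_eq0 habs 0) erefl). Qed.

Lemma psum_bound (a : nat -> K) (w : K) (c rh : R) :
  (forall i, abs (a i) * rh ^+ i <= c) -> 0 <= c -> 0 <= rh -> abs w <= rh ->
  forall n, abs (psum a w n) <= c.
Proof.
move=> ha c0 rh0 hw; elim=> [|n IH]; first by rewrite /psum big_ord0 abs0.
rewrite /psum big_ord_recr /=; apply: abs_le; first exact: IH.
rewrite (absM habs) absX; apply: le_trans (ha n).
apply: ler_wpM2l; first exact: abs_ge0 habs _.
by apply: lerXn2r; rewrite ?nnegrE ?(abs_ge0 habs).
Qed.

Lemma lim_bound (u : nat -> K) q c :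
  abs_cvg abs u q -> (forall n, abs (u n) <= c) -> abs q <= c.
Proof.
move=> hcv hb; rewrite leNgt; apply/negP => hc.
have hq : 0 < abs q by apply: le_lt_trans hc; apply: le_trans (hb 0%N); exact: abs_ge0 habs _.
have [N hN] := hcv _ hq.
have := hN N (leqnn N) => hN'.
have : abs (u N + - (u N - q)) < abs q.
  by apply: abs_lt; [exact: le_lt_trans (hb N) hc | rewrite absN].
by rewrite opprB addrA (addrC (u N)) addrK ltxx.
Qed.

Section Step.
Variables (Qf : K -> K) (lam h : K) (rh : R).
Hypotheses (hp1 : (1 < p)%N) (hlam1 : abs lam = 1) (hh : abs (h - 1) < 1)
  (hQ : forall w, abs w <= rh -> abs (Qf w) < 1).

Lemma step z : 1 <= abs z -> 1 <= abs (z - 1) -> abs z <= rh ->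
  p%:R * abs z <= abs (Qlam p Qf lam h z).
Proof.
move=> hz hz1 hzr.
set w := z + h - 1.
have hw : abs w = abs z.
  rewrite /w (_ : z + h - 1 = z + (h - 1)); last by ring.
  by apply: abs_dom; apply: lt_le_trans hz.
have hw1 : abs (w - 1) = abs (z - 1).
  rewrite /w (_ : z + h - 1 - 1 = (z - 1) + (h - 1)); last by ring.
  by apply: abs_dom; apply: lt_le_trans hz1.
have habsp : abs (p%:R) = (p%:R)^-1 := abs_p habs.
have hP : Plam p lam w = w ^+ p * (lam / p%:R * (1 - w) + w).
  by rewrite /Plam exprS; ring.
have hp1R : (1 : R) < p%:R by rewrite ltr1n.
have hzz1 : abs z <= abs (z - 1).
  rewrite -[z](subrK 1) addrK; apply: abs_le => //; by rewrite abs1.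
have ht : abs (lam / p%:R * (1 - w)) = p%:R * abs (z - 1).
  by rewrite !(absM habs) absV habsp invrK hlam1 mul1r abs_sub hw1.
have hPa : abs (Plam p lam w) = abs z ^+ p * (p%:R * abs (z - 1)).
  rewrite hP (absM habs) absX hw (@abs_dom (lam / p%:R * (1 - w)) w) ?ht //.
  rewrite hw; apply: le_lt_trans hzz1 _.
  by rewrite -[X in X < _]mul1r ltr_pM2r // (lt_le_trans ltr01 hz1).
have hQw : abs (Qf w + (1 - h)) < 1.
  by apply: abs_lt; [apply: hQ; rewrite hw | rewrite abs_sub].
have hzp : 1 <= abs z ^+ p by apply: exprn_ege1.
have hpa : p%:R * abs z <= p%:R * abs (z - 1).
  by rewrite ler_pM2l // (lt_trans ltr01 hp1R).
have hpa1 : p%:R * abs (z - 1) <= abs z ^+ p * (p%:R * abs (z - 1)).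
  rewrite ler_peMl //; apply: mulr_ge0; [exact: ltW (lt_trans ltr01 hp1R)| exact: abs_ge0 habs _].
have -> : Qlam p Qf lam h z = Plam p lam w + (Qf w + (1 - h)) by rewrite /Qlam /w; ring.
rewrite abs_dom hPa; first exact: le_trans hpa hpa1.
apply: lt_le_trans hQw _; apply: le_trans hpa1.
apply: le_trans (ltW hp1R) _; rewrite -[X in X <= _]mulr1 ler_pM2l //; first exact: lt_trans ltr01 hp1R.
Qed.

End Step.

End S.

Unset Implicit Arguments.
Lemma rho_le1 (R : realType) (p : nat) : (1 < p)%N -> rho R p <= 1.
Proof.
move=> hp; rewrite /rho.
have h1 : (1 : R) <= p%:R by rewrite ler1n ltnW.
have e : (p%:R : R) `^ 0 = 1 := powRr0 _.
rewrite -[X in _ <= X]e; apply: (ler_powR h1).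
rewrite oppr_le0 divr_ge0 // subr_ge0 ler1n ltnW //.
Qed.

Theorem proposition3p7
  (R : realType) (K : closedFieldType) (p : nat) (abs : K -> R)
  (hp : prime p) (habs : padic_abs abs p)
  (rhat : R) (hr_val : exists w : K, w != 0 /\ abs w = rhat) (hr1 : 1 < rhat)
  (a : nat -> K) (Qf : K -> K)
  (hQconv : forall eps : R, 0 < eps -> exists N : nat, forall i : nat,
              (N <= i)%N -> abs (a i) * rhat ^+ i < eps)
  (hQf : forall z : K, abs z <= rhat -> abs_cvg abs (psum a z) (Qf z))
  (hQnorm : exists c : R, c < rho R p /\ forall i : nat, abs (a i) * rhat ^+ i <= c)
  (lam : K) (hlam : abs (lam - 1) < 1)
  (h : K) (hfix : Plam p lam h + Qf h = h)
  (hdisc : abs (h - 1) <= abs (Qf 1) / p%:R) :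
  forall z : K, (forall n : nat, abs (iter n (Qlam p Qf lam h) z) <= rhat) ->
    abs z < 1 \/ abs (z - 1) < 1.
Proof.
move=> z hit.
have hp1 : (1 < p)%N := prime_gt1 hp.
have hp1R : (1 : R) < p%:R by rewrite ltr1n.
have hp0R : (0 : R) < p%:R := lt_trans ltr01 hp1R.
have [c [hcr hc]] := hQnorm.
have c0 : 0 <= c by apply: le_trans (hc 0%N); apply: mulr_ge0; [exact: abs_ge0 habs _| rewrite expr0].
have c1 : c < 1 := lt_le_trans hcr (@rho_le1 R p hp1).
have rh0 : 0 <= rhat by apply: ltW (lt_trans ltr01 hr1).
have hQ : forall w, abs w <= rhat -> abs (Qf w) < 1.
  move=> w hw; apply: le_lt_trans c1.
  exact: (lim_bound habs c (hQf w hw) (psum_bound habs a w c rhat hc c0 rh0 hw)).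
have hh : abs (h - 1) < 1.
  apply: le_lt_trans hdisc _.
  have hq1 : abs (Qf 1) < 1 by apply: hQ; rewrite (abs1 habs) ltW.
  rewrite ltr_pdivrMr // mul1r; exact: lt_trans hq1 hp1R.
have hlam1 : abs lam = 1.
  rewrite -[lam](subrK 1) addrC (abs_dom habs) (abs1 habs) //.
case: (ltP (abs z) 1) => hz; first by left.
case: (ltP (abs (z - 1)) 1) => hz1; first by right.
exfalso.
set f := Qlam p Qf lam h.
have key : forall n, p%:R ^+ n <= abs (iter n f z) /\ 1 <= abs (iter n f z - 1).
  elim=> [|n [IH1 IH2]]; first by rewrite expr0.
  have hn1 : 1 <= abs (iter n f z) := le_trans (exprn_ege1 n (ltW hp1R)) IH1.
  have hs := step habs Qf lam h rhat hp1 hlam1 hh hQ (iter n f z) hn1 IH2 (hit n).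
  rewrite iterS; fold f in hs.
  have hb : p%:R ^+ n.+1 <= abs (f (iter n f z)).
    by apply: le_trans hs; rewrite exprS ler_pM2l.
  split => //.
  have hgt : 1 < abs (f (iter n f z)).
    apply: lt_le_trans hs; apply: lt_le_trans hp1R _.
    by rewrite -[X in X <= _]mulr1 ler_pM2l.
  rewrite (abs_dom habs); first exact: ltW hgt.
  by rewrite (absN habs) (abs1 habs).
have [N hN] : exists N : nat, rhat < N%:R.
  by exists (Num.bound rhat); apply: archi_boundP.
have := le_trans (proj1 (key N)) (hit N).
apply/negP; rewrite -ltNge; apply: lt_trans hN _.
by rewrite -natrX ltr_nat ltn_expl.
Qed.
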